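(* Let $A=A_1\cdots A_n$ be a string over $\Sigma$, $\mathcal R\subseteq\Sigma\times\Sigma$, $B\ge1$, and let $G=(V,E)$ be the graph defined below. Then for every $i\in\{1,\dots,n\}$ and every $v\in V$, at least one of $V_{-v}\cap S_i=\emptyset$, $V_{+v}\cap S_i=\emptyset$, or $v\in S_i$ holds. Moreover, for every $v\in V$, the number of indices $i\in\{1,\dots,n\}$ with both $V_{-v}\cap S_i\ne\emptyset$ and $V_{+v}\cap S_i\neq\emptyset$ is at most $6B$.
   Context: An interval is a set of integers $[a,b]=\{a,\dots,b\}$ with $a\le b$, with endpoints $l([a,b])=a$, $r([a,b])=b$. A pseudo-interval is an interval or $\emptyset$. A pseudo-interval $I'$ is strictly inside an interval $I$ if $I'\subseteq I$ and $\{l(I),r(I)\}\cap I'=\emptyset$. A triple $(I,H,L)$ of pseudo-intervals is well-ordered if (a) $I\ne\emptyset$, $l(I)<r(I)$; (b) $H\neq\emptyset$, $l(H)<r(H)$; (c) $H$ and $L$ are strictly inside $I$; (d) $H\cap L=\emptyset$. For well-ordered triples, $(I,H,L)\preceq(I',H',L')$ iff $(I,H,L)=(I',H',L')$, or $I'\subseteq H$, or ($I=I'$, $H=H'$, $L=\emptyset$), or ($I=I'$, $H=H'$, $L\ne\emptyset\ne L'$, $r(L)<l(L')$); write $x\prec y$ if $x\preceq y$ and $x\neq y$. The vertex set $V$ consists of all lists $((I_1,H_1,L_1),\dots,(I_k,H_k,L_k))$ of well-ordered triples with $1\le k\le B$ such that: (i) $I_j\subseteq[0,n+1]$ and $H_j,L_j\subseteq[1,n]$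 for all $j$; (ii) $(A_{l(H_j)},A_{r(H_j)})\in\mathcal R$ for all $j$; (iii) $(A_{l(L_j)},A_{r(L_j)})\in\mathcal R$ for all $j$ with $L_j\ne\emptyset$; (iv) $I_{j'}\subseteq L_j$ for all $j<j'$. A list $v=(x_1,\dots,x_k)$ is lexicographically strictly smaller than $v'=(x'_1,\dots,x'_{k'})$ if $v$ is a proper prefix of $v'$, or $x_j\prec x'_j$ for the first index $j$ with $x_j\ne x'_j$. $E=\{(v,v'):v \text{ is lexicographically strictly smaller than } v'\}$. For $v\in V$, $V_{-v}=\{u\in V:(u,v)\in E\}$ and $V_{+v}=\{u\in V:(v,u)\in E\}$. For $i\in\{1,\dots,n\}$, $S_i$ is the set of vertices $((I_1,H_1,L_1),\dots,(I_k,H_k,L_k))\in V$ such that $i$ is an endpoint of at least one of the nonempty pseudo-intervals $I_1,H_1,L_1,\dots,I_k,H_k,L_k$. *)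

(* Defs.v *)
(* Intervals of integers are represented by pairs
   of naturals: all intervals in the vertex set lie in [0, n+1], so nat suffices. *)
From mathcomp Require Import all_boot.
Set Implicit Arguments. Unset Strict Implicit. Unset Printing Implicit Defensive.

(* A pseudo-interval: [Some (a,b)] is the interval [a,b] (well-formed when a <= b),
   [None] is the empty set. *)
Definition pint := option (nat * nat).

Definition pint_wf (p : pint) : Prop :=
  match p with Some (a, b) => a <= b | None => True end.

Definition pmem (x : nat) (p : pint) : Prop :=
  match p with Some (a, b) => a <= x <= b | None => False end.

Definition psub (p q : pint) : Prop := forall x, pmem x p -> pmem x q.

Definition lft (p : pint) : nat := match p with Some (a, _) => a | None => 0 end.
Definition rgt (p : pint) : nat := match p with Some (_, b) => b | None => 0 end.

Definition strictly_inside (p q : pint) : Prop :=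
  psub p q /\ ~ pmem (lft q) p /\ ~ pmem (rgt q) p.

Definition triple := (pint * pint * pint)%type.
Definition tI (t : triple) : pint := t.1.1.
Definition tH (t : triple) : pint := t.1.2.
Definition tL (t : triple) : pint := t.2.

Definition well_ordered (t : triple) : Prop :=
  let: (I0, H0, L0) := t in
  (pint_wf I0 /\ pint_wf H0 /\ pint_wf L0) /\
  (I0 <> None /\ lft I0 < rgt I0) /\
  (H0 <> None /\ lft H0 < rgt H0) /\
  (strictly_inside H0 I0 /\ strictly_inside L0 I0) /\
  (forall x, ~ (pmem x H0 /\ pmem x L0)).

Definition tle (x y : triple) : Prop :=
  let: (I0, H0, L0) := x in
  let: (I1, H1, L1) := y in
  x = y \/ psub I1 H0 \/ (I0 = I1 /\ H0 = H1 /\ L0 = None) \/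
  (I0 = I1 /\ H0 = H1 /\ L0 <> None /\ L1 <> None /\ rgt L0 < lft L1).

Definition tlt (x y : triple) : Prop := tle x y /\ x <> y.

Definition dummy_triple : triple := (None, None, None).

Definition lexlt (v v' : seq triple) : Prop :=
  (size v < size v' /\ v = take (size v) v') \/
  (exists j, [/\ j < size v, j < size v', take j v = take j v',
     nth dummy_triple v j <> nth dummy_triple v' j &
     tlt (nth dummy_triple v j) (nth dummy_triple v' j)]).

Section Graph.
Variables (Sigma : Type) (A : nat -> Sigma) (R : Sigma -> Sigma -> Prop) (n B : nat).

(* the vertex set V; list positions are 0-based (index j here = j+1 in the paper) *)
Definition inV (v : seq triple) : Prop :=
  [/\ 1 <= size v <= B,
      (forall j, j < size v -> well_ordered (nth dummy_triple v j)),
      (forall j, j < size v ->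
         let t := nth dummy_triple v j in
         [/\ psub (tI t) (Some (0, n.+1)), psub (tH t) (Some (1, n)),
             psub (tL t) (Some (1, n)),
             R (A (lft (tH t))) (A (rgt (tH t)))
           & (tL t <> None -> R (A (lft (tL t))) (A (rgt (tL t))))]) &
      (forall j j', j < j' -> j' < size v ->
         psub (tI (nth dummy_triple v j')) (tL (nth dummy_triple v j)))].

Definition edge (u v : seq triple) : Prop := lexlt u v.

Definition Vminus (v u : seq triple) : Prop := inV u /\ edge u v.
Definition Vplus (v u : seq triple) : Prop := inV u /\ edge v u.

Definition is_endpoint (i : nat) (p : pint) : Prop :=
  p <> None /\ (i = lft p \/ i = rgt p).

Definition inS (i : nat) (v : seq triple) : Prop :=
  inV v /\ exists j, j < size v /\
    let t := nth dummy_triple v j in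
    is_endpoint i (tI t) \/ is_endpoint i (tH t) \/ is_endpoint i (tL t).

End Graph.

(* Main.v *)
Require Import Defs.
From mathcomp Require Import all_boot.
From mathcomp Require Import zify.
From Stdlib Require Import Classical.
Set Implicit Arguments.

Definition good (v : seq triple) : Prop :=
  (forall j, j < size v -> well_ordered (nth dummy_triple v j)) /\
  (forall j j', j < j' -> j' < size v ->
     psub (tI (nth dummy_triple v j')) (tL (nth dummy_triple v j))).

Lemma inV_good Sigma (A : nat -> Sigma) R n B v : inV A R n B v -> good v.
Proof. by case=> _ H1 _ H2; split. Qed.

Lemma wo_spec {t} : well_ordered t ->
  [/\ pint_wf (tI t), pint_wf (tH t), pint_wf (tL t), tI t <> None & tH t <> None] /\
  [/\ strictly_inside (tH t) (tI t), strictly_inside (tL t) (tI t) &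
      forall x, pmem x (tH t) -> pmem x (tL t) -> False].
Proof.
case: t => [[I0 H0] L0]; rewrite /well_ordered /tI /tH /tL /=.
move=> [[wI [wH wL]] [[nI _] [[nH _] [[sH sL] dj]]]].
split; split => //. move=> x a b; exact: (dj x (conj a b)).
Qed.

Definition strict_in x p := pmem x p /\ x <> lft p /\ x <> rgt p.

Lemma ep_mem {i p} : pint_wf p -> is_endpoint i p -> pmem i p.
Proof.
case: p => [[a b]|]; last by move=> _ [].
rewrite /pint_wf /is_endpoint /lft /rgt /pmem /= => wf [_ [->|->]];
  apply/andP; split => //.
Qed.

Lemma lft_mem L : L <> None -> pint_wf L -> pmem (lft L) L.
Proof. case: L => [[a b]|] //= _ wf; rewrite /pmem /lft /=; apply/andP; split=> //. Qed.

Lemma si_strict {p q x} : strictly_inside p q -> pmem x p -> strict_in x q.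
Proof.
move=> [sub [nl nr]] hx; split; first exact: sub.
split=> E; [apply: nl | apply: nr]; by rewrite -E.
Qed.

Lemma strict_in_H {I H x} : I <> None -> pint_wf I -> H <> None -> psub I H ->
  strict_in x I -> pmem x H /\ (lft H < x /\ x < rgt H).
Proof.
case: I => [[a b]|] // _; case: H => [[c d]|] // wf _ sub [hx [hl hr]].
have ha : pmem a (Some (a, b)) by rewrite /pmem /=; apply/andP; split.
have hb : pmem b (Some (a, b)) by rewrite /pmem /=; apply/andP; split.
split; first exact: sub.
move: (sub _ ha) (sub _ hb) hx hl hr; rewrite /pmem /lft /rgt /=.
move=> /andP[? ?] /andP[? ?] /andP[? ?] ? ?; lia.
Qed.

Lemma nth_take_eq {u v : seq triple} {j q : nat} : take j u = take j v -> q < j ->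
  nth dummy_triple u q = nth dummy_triple v q.
Proof. move=> E hq. by rewrite -(nth_take _ hq u) E nth_take. Qed.

Definition EPat (t : triple) i :=
  is_endpoint i (tI t) \/ is_endpoint i (tH t) \/ is_endpoint i (tL t).
Definition EP i v := exists j, j < size v /\ EPat (nth dummy_triple v j) i.

Lemma EPat_mem {t i} : well_ordered t -> EPat t i -> pmem i (tI t).
Proof.
move=> /wo_spec [[wI wH wL _ _] [sH sL _]] [h|[h|h]].
- exact: ep_mem.
- apply: (proj1 sH); exact: ep_mem wH h.
- apply: (proj1 sL); exact: ep_mem wL h.
Qed.

Lemma deep {v p q i} : good v -> q < p -> p < size v ->
  EPat (nth dummy_triple v p) i -> pmem i (tL (nth dummy_triple v q)).
Proof. move=> [wo ne] hqp hp h. apply: (ne q p hqp hp). exact: EPat_mem (wo p hp) h. Qed.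

Lemma pos_split {u j p i} : good u -> j <= p -> p < size u ->
  EPat (nth dummy_triple u p) i ->
  (p = j /\ EPat (nth dummy_triple u j) i) \/ pmem i (tL (nth dummy_triple u j)).
Proof.
move=> g hjp hp h. have [E|ne] := eqVneq p j; first by subst; left.
right; apply: deep g _ hp h. move/eqP: ne; lia.
Qed.

Lemma lt_mems {L0 L1 x y} : pmem x L0 -> pmem y L1 -> rgt L0 < lft L1 -> x < y.
Proof.
case: L0 => [[a b]|] //; case: L1 => [[c d]|] //; rewrite /pmem /lft /rgt /=.
move=> /andP[? ?] /andP[? ?] ?; lia.
Qed.
Unset Implicit Arguments.

Lemma uside u v i p : good u -> good v -> lexlt u v -> p < size u ->
  EPat (nth dummy_triple u p) i -> ~ EP i v ->
  exists j, [/\ j < size v, (forall q, q < j -> pmem i (tL (nth dummy_triple v q))) &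
   ~ strict_in i (tI (nth dummy_triple v j)) \/
   [/\ ~ pmem i (tH (nth dummy_triple v j)), tL (nth dummy_triple v j) <> None &
       forall x, pmem x (tL (nth dummy_triple v j)) -> i < x]].
Proof.
move=> gu gv [[hs E]|[j [hju hjv ht hne hlt]]] hp hep nEP.
  exfalso; apply: nEP; exists p; split; first lia.
  by rewrite E nth_take // in hep.
have hjp : j <= p.
  rewrite leqNgt; apply/negP => hpj; apply: nEP; exists p; split; first lia.
  by rewrite -(nth_take_eq ht hpj).
exists j; split => //.
  move=> q hq; rewrite -(nth_take_eq ht hq); apply: deep gu _ hp hep; lia.
have hsplit := pos_split gu hjp hp hep.
have [[wIu wHu wLu nIu nHu] [sHu sLu dju]] := wo_spec (gu.1 j hju).
have [[wIv wHv wLv nIv nHv] [sHv sLv djv]] := wo_spec (gv.1 j hjv).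
have shared : forall x, x = tI (nth dummy_triple v j) \/ x = tH (nth dummy_triple v j) ->
   is_endpoint i x -> False.
  move=> x [->|->] h; apply: nEP; exists j; split=> //; rewrite /EPat; auto.
move: hsplit shared wIu wHu wLu nIu nHu sHu sLu dju wIv wHv wLv nIv nHv sHv sLv djv hlt hne.
case: (nth dummy_triple u j) => [[I0 H0] L0]; case: (nth dummy_triple v j) => [[I1 H1] L1].
rewrite /tlt /tle /EPat /tI /tH /tL /=.
move=> hsplit shared wI0 wH0 wL0 nI0 nH0 sH0 sL0 dj0 wI1 wH1 wL1 nI1 nH1 sH1 sL1 dj1 [hle _] hne.
have key : is_endpoint i I0 \/ is_endpoint i H0 \/ pmem i L0.
  case: hsplit => [[_ [h|[h|h]]]|h]; auto; right; right; exact: ep_mem wL0 h.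
case: hle => [E|[hsub|[[eI [eH eL]]|[eI [eH [nL0 [nL1 hlt]]]]]]].
- by [].
- left => hst; have [hH [lt1 lt2]] := strict_in_H nI1 wI1 nH0 hsub hst.
  case: key => [[_ [E|E]]|[[_ [E|E]]|h]].
  + by apply: (proj1 (proj2 sH0)); rewrite -E.
  + by apply: (proj2 (proj2 sH0)); rewrite -E.
  + lia.
  + lia.
  + exact: dj0 i hH h.
- subst; case: key => [h|[h|h]] //.
  + by case: (shared _ (or_introl erefl) h).
  + by case: (shared _ (or_intror erefl) h).
- subst; right.
  have h : pmem i L0.
    case: key => [h|[h|h]] //.
    + by case: (shared _ (or_introl erefl) h).
    + by case: (shared _ (or_intror erefl) h).
  split => //.
  + move=> hH; exact: dj0 i hH h.
  + move=> x hx; exact: lt_mems h hx hlt.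
Qed.

Lemma wside v w i p : good v -> good w -> lexlt v w -> p < size w ->
  EPat (nth dummy_triple w p) i -> ~ EP i v ->
  exists j, [/\ j <= size v, (forall q, q < j -> pmem i (tL (nth dummy_triple v q))) &
   j < size v -> pmem i (tH (nth dummy_triple v j)) \/
     (strict_in i (tI (nth dummy_triple v j)) /\
      forall x, pmem x (tL (nth dummy_triple v j)) -> x < i)].
Proof.
move=> gv gw [[hs E]|[j [hjv hjw ht hne hlt]]] hp hep nEP.
  have hvp : size v <= p.
    rewrite leqNgt; apply/negP=> hpv; apply: nEP; exists p; split=> //.
    by rewrite E nth_take.
  exists (size v); split=> //; last by rewrite ltnn.
  move=> q hq.
  have -> : nth dummy_triple v q = nth dummy_triple w q by rewrite {1}E nth_take.
  apply: deep gw _ hp hep; lia.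
have hjp : j <= p.
  rewrite leqNgt; apply/negP => hpj; apply: nEP; exists p; split; first lia.
  by rewrite (nth_take_eq ht hpj).
exists j; split => //; first lia.
  move=> q hq; rewrite (nth_take_eq ht hq); apply: deep gw _ hp hep; lia.
move=> _.
have hsplit := pos_split gw hjp hp hep.
have [[wIu wHu wLu nIu nHu] [sHu sLu dju]] := wo_spec (gv.1 j hjv).
have [[wIv wHv wLv nIv nHv] [sHv sLv djv]] := wo_spec (gw.1 j hjw).
have hIw : pmem i (tI (nth dummy_triple w j)).
  case: hsplit => [[_ h]|h]; first exact: EPat_mem (gw.1 j hjw) h.
  exact: (proj1 sLv).
have shared : forall x, x = tI (nth dummy_triple v j) \/ x = tH (nth dummy_triple v j) ->
   is_endpoint i x -> False.
  move=> x [->|->] h; apply: nEP; exists j; split=> //; rewrite /EPat; auto.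
move: hsplit shared hIw wIu wHu wLu nIu nHu sHu sLu dju wIv wHv wLv nIv nHv sHv sLv djv hlt hne.
case: (nth dummy_triple v j) => [[I0 H0] L0]; case: (nth dummy_triple w j) => [[I1 H1] L1].
rewrite /tlt /tle /EPat /tI /tH /tL /=.
move=> hsplit shared hIw wI0 wH0 wL0 nI0 nH0 sH0 sL0 dj0 wI1 wH1 wL1 nI1 nH1 sH1 sL1 dj1 [hle _] hne.
have key : is_endpoint i I1 \/ is_endpoint i H1 \/ pmem i L1.
  case: hsplit => [[_ [h|[h|h]]]|h]; auto; right; right; exact: ep_mem wL1 h.
case: hle => [E|[hsub|[[eI [eH eL]]|[eI [eH [nL0 [nL1 hlt]]]]]]].
- by [].
- by left; apply: hsub.
- subst; right.
  have h : pmem i L1.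
    case: key => [h|[h|h]] //.
    + by case: (shared _ (or_introl erefl) h).
    + by case: (shared _ (or_intror erefl) h).
  by split => //; apply: si_strict sL1 h.
- subst; right.
  have h : pmem i L1.
    case: key => [h|[h|h]] //.
    + by case: (shared _ (or_introl erefl) h).
    + by case: (shared _ (or_intror erefl) h).
  split; first by apply: si_strict sL1 h.
  move=> x hx; exact: lt_mems hx h hlt.
Qed.

Lemma part1 Sigma (A : nat -> Sigma) R n B i v : inV A R n B v ->
     (~ exists u, Vminus A R n B v u /\ inS A R n B i u) \/
     (~ exists u, Vplus A R n B v u /\ inS A R n B i u) \/
     inS A R n B i v.
Proof.
move=> hv; have gv := inV_good hv.
case: (classic (EP i v)) => [[j [hj h]]|nEP].
  by right; right; split => //; exists j; split.
case: (classic (exists u, Vminus A R n B v u /\ inS A R n B i u))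
  => [[u [[hu huv] [_ [p [hp hep]]]]]|nU]; last by left.
right; left => -[w [[hw hvw] [_ [q [hq heq]]]]].
have [ju [hju hbu hU]] := uside u v i p (inV_good hu) gv huv hp hep nEP.
have [jw [hjw hbw hW]] := wside v w i q gv (inV_good hw) hvw hq heq nEP.
case: (ltngtP ju jw) => hc.
- have hL := hbw ju hc.
  have [[_ _ wL _ _] [_ sL _]] := wo_spec (gv.1 ju hju).
  case: hU => [hU|[_ _ hlt]]; first exact: hU (si_strict sL hL).
  by have := hlt i hL; rewrite ltnn.
- have hjw' : jw < size v by lia.
  have hL := hbu jw hc.
  have [[_ _ wL _ _] [_ sL dj]] := wo_spec (gv.1 jw hjw').
  case: (hW hjw') => [hH|[_ hx]]; first exact: dj i hH hL.
  by have := hx i hL; rewrite ltnn.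
- subst jw.
  have [[_ _ wL _ _] [sH sL dj]] := wo_spec (gv.1 ju hju).
  case: (hW hju) => [hH|[hst hx]].
  + case: hU => [hU|[nH _ _]]; last exact: nH hH.
    exact: hU (si_strict sH hH).
  + case: hU => [hU|[_ nL hlt]]; first exact: hU hst.
    have hm := lft_mem nL wL.
    have := hlt _ hm; have := hx _ hm; lia.
Qed.

Fixpoint eps (v : seq triple) : seq nat :=
  if v is t :: v' then
    [:: lft (tI t); rgt (tI t); lft (tH t); rgt (tH t); lft (tL t); rgt (tL t)] ++ eps v'
  else [::].

Lemma size_eps v : size (eps v) = 6 * size v.
Proof. elim: v => [|t v IH] //=; rewrite IH; lia. Qed.

Lemma EP_eps i v : EP i v -> i \in eps v.
Proof.
elim: v => [|t v IH] [j [hj h]] //=.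
case: j hj h => [|j] hj h /=.
  case: h => [[_ [->|->]]|[[_ [->|->]]|[_ [->|->]]]]; rewrite !inE eqxx ?orbT //.
have hi : i \in eps v by apply: IH; exists j; split.
by rewrite !in_cons hi ?orbT.
Qed.

Theorem lemma9 (Sigma : Type) (A : nat -> Sigma) (R : Sigma -> Sigma -> Prop)
    (n B : nat) (hB : 1 <= B) :
  (forall (i : nat) (v : seq triple), 1 <= i <= n -> inV A R n B v ->
     (~ exists u, Vminus A R n B v u /\ inS A R n B i u) \/
     (~ exists u, Vplus A R n B v u /\ inS A R n B i u) \/
     inS A R n B i v) /\
  (forall v : seq triple, inV A R n B v ->
     forall s : seq nat, uniq s ->
       (forall i, i \in s ->
          [/\ 1 <= i <= n,
              (exists u, Vminus A R n B v u /\ inS A R n B i u) &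
              (exists u, Vplus A R n B v u /\ inS A R n B i u)]) ->
       size s <= 6 * B).
Proof.
split; first by move=> i v _ hv; exact: part1.
move=> v hv s us hs.
have sub : {subset s <= eps v}.
  move=> i /hs [_ hU hW]; apply: EP_eps.
  case: (part1 _ _ _ _ _ i _ hv) => [h|[h|[_ [j [hj h]]]]]; [by case: h | by case: h |].
  by exists j; split.
have := uniq_leq_size us sub; rewrite size_eps.
move=> h; case: hv => /andP[_ hsB] _ _ _.
apply: leq_trans h _; by rewrite leq_mul2l hsB orbT.
Qed.
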